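(* For every integer $N\ge2$ and every ORN design on $N$ nodes (with arbitrary, possibly unbounded, maximum latency) that guarantees throughput $r$, we have \[ r\;\le\;\frac12+\frac{1}{2(N-1)}. \]
   Context: Nodes are $[N]=\{1,\dots,N\}$. A connection schedule of size $N$ and period $T\ge1$ is a sequence of permutations $\pi_0,\dots,\pi_{T-1}$ of $[N]$; write $\pi_t=\pi_{t \bmod T}$ for all $t\in\mathbb Z$. Its virtual topology is the directed graph $G$ with vertex set $[N]\times\mathbb Z$ whose edges are the virtual edges $(i,t)\to(i,t+1)$ and the physical edges $(i,t)\to(\pi_t(i),t+1)$, for all $i\in[N]$, $t\in\mathbb Z$. The latency of a finite directed path in $G$ is its number of edges. For $a,b\in[N]$, $t\in\mathbb Z$, $\mathcal P(a,b,t)$ is the set of paths in $G$ from $(a,t)$ to some vertex $(b,t')$, and $\mathcal P$ is the set of all paths. A flow is a function $f:\mathcal P\to[0,\infty)$; the load on an edge $e$ is $F(f,e)=\sum_{P\ni e}f(P)$; $f$ is feasible if $F(f,e)\le 1$ for every physical edge $e$. An oblivious routing scheme $R$ assigns to each $(a,b,t)\in[N]\times[N]\times\mathbb Z$ a flow $R_{a,b,t}$ supported on $\mathcal P(a,b,t)$ with $\sum_P R_{a,b,t}(P)=1$, which is periodic: $R_{a,b,t+T}$ is obtained from $R_{a,b,t}$ by shifting every path by $T$ in the time coordinate. An ORN design on $N$ nodes is a connection schedule together with an oblivious routing scheme on its virtual topology. A demand function $D$ assigns to each $t\in\mathbb Z$ an $N\times N$ matrix $D(t)$ with nonnegative entries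 $D(t,a,b)$; it requests throughput equal to the supremum over $t$ of the maximum row sum or column sum of $D(t)$. The induced flow is $f(R,D)=\sum_{a,b,t}D(t,a,b)R_{a,b,t}$. The design guarantees throughput $r$ if $f(R,D)$ is feasible for every demand function $D$ requesting throughput at most $r$. *)

(* Defs.v *)
From HB Require Import structures.
From mathcomp Require Import all_boot all_order all_algebra.
From mathcomp Require Import all_classical all_reals.
From mathcomp Require Import ereal esum.
From mathcomp Require Import fingroup perm.
Set Implicit Arguments. Unset Strict Implicit. Unset Printing Implicit Defensive.
Import Order.TTheory GRing.Theory Num.Theory.
Local Open Scope classical_set_scope.
Local Open Scope ring_scope.

(* A connection schedule of size N is given as a map pi : int -> {perm 'I_N},
   required (below) to be periodic with period T >= 1; this is the same as a
   sequence pi_0..pi_{T-1} extended by pi_t = pi_{t mod T}. *)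
Definition periodic_schedule (N T : nat) (pi : int -> {perm 'I_N}) : Prop :=
  (0 < T)%N /\ forall t : int, pi (t + T%:Z) = pi t.

(* An edge of the virtual topology: (i, t, b) is the edge leaving vertex (i,t);
   b = false : virtual edge (i,t) -> (i,t+1);
   b = true  : physical edge (i,t) -> (pi_t(i), t+1). *)
Definition edge (N : nat) := ('I_N * int * bool)%type.

(* A finite directed path: start vertex (i,t) and the sequence of edge kinds. *)
Definition vpath (N : nat) := ('I_N * int * seq bool)%type.

Definition step N (pi : int -> {perm 'I_N}) (i : 'I_N) (t : int) (b : bool) : 'I_N :=
  if b then pi t i else i.

Fixpoint walk_edges N (pi : int -> {perm 'I_N}) (i : 'I_N) (t : int) (s : seq bool)
  : seq (edge N) :=
  if s is b :: s' then (i, t, b) :: walk_edges pi (step pi i t b) (t + 1) s' else [::].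

Fixpoint walk_end N (pi : int -> {perm 'I_N}) (i : 'I_N) (t : int) (s : seq bool)
  : 'I_N :=
  if s is b :: s' then walk_end pi (step pi i t b) (t + 1) s' else i.

Definition path_edges N (pi : int -> {perm 'I_N}) (P : vpath N) : seq (edge N) :=
  walk_edges pi P.1.1 P.1.2 P.2.

(* The path ends at vertex (path_end P, P.1.2 + size P.2). *)
Definition path_end N (pi : int -> {perm 'I_N}) (P : vpath N) : 'I_N :=
  walk_end pi P.1.1 P.1.2 P.2.

Definition in_Pabt N (pi : int -> {perm 'I_N}) (a b : 'I_N) (t : int) (P : vpath N) : Prop :=
  P.1.1 = a /\ P.1.2 = t /\ path_end pi P = b.

Definition is_physical N (e : edge N) : bool := e.2.

Definition shift_path N (T : nat) (P : vpath N) : vpath N := (P.1.1, P.1.2 + T%:Z, P.2).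

Definition load (R : realType) N (pi : int -> {perm 'I_N}) (f : vpath N -> \bar R)
  (e : edge N) : \bar R :=
  \esum_(P in [set P : vpath N | e \in path_edges pi P]) f P.

Definition feasible (R : realType) N (pi : int -> {perm 'I_N}) (f : vpath N -> \bar R) : Prop :=
  forall e : edge N, is_physical e -> (load pi f e <= 1)%E.

Definition oblivious_routing (R : realType) N (T : nat) (pi : int -> {perm 'I_N})
  (Rt : 'I_N -> 'I_N -> int -> vpath N -> \bar R) : Prop :=
  (forall a b t P, (0 <= Rt a b t P)%E /\ Rt a b t P \is a fin_num) /\
  (forall a b t P, ~ in_Pabt pi a b t P -> Rt a b t P = 0%E) /\
  (forall a b t, \esum_(P in [set: vpath N]) Rt a b t P = 1%E) /\
  (forall a b t P, Rt a b (t + T%:Z) (shift_path T P) = Rt a b t P).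

Definition demand_ok (R : realType) N (D : int -> 'M[R]_N) : Prop :=
  forall t a b, 0 <= D t a b.

Definition requests_at_most (R : realType) N (D : int -> 'M[R]_N) (r : R) : Prop :=
  forall t : int,
    (forall a, \sum_(b < N) D t a b <= r) /\ (forall b, \sum_(a < N) D t a b <= r).

Definition induced_flow (R : realType) N (Rt : 'I_N -> 'I_N -> int -> vpath N -> \bar R)
  (D : int -> 'M[R]_N) : vpath N -> \bar R :=
  fun P => \esum_(x in [set: 'I_N * 'I_N * int]) ((D x.2 x.1.1 x.1.2)%:E * Rt x.1.1 x.1.2 x.2 P)%E.

Definition guarantees_throughput (R : realType) N (pi : int -> {perm 'I_N})
  (Rt : 'I_N -> 'I_N -> int -> vpath N -> \bar R) (r : R) : Prop :=
  forall D : int -> 'M[R]_N, demand_ok D -> requests_at_most D r ->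
    feasible pi (induced_flow Rt D).

(* Main.v *)
Require Import Defs.
From HB Require Import structures.
From mathcomp Require Import all_boot all_order all_algebra.
From mathcomp Require Import all_classical all_reals.
From mathcomp Require Import ereal esum.
From mathcomp Require Import fingroup perm.
From mathcomp Require Import ring lra.
Import Order.TTheory GRing.Theory Num.Theory.
Set Implicit Arguments. Unset Strict Implicit. Unset Printing Implicit Defensive.
Local Open Scope classical_set_scope.
Local Open Scope ring_scope.



Definition eshift N (c : int) (e : edge N) : edge N := (e.1.1, e.1.2 + c, e.2).
Definition spath N (c : int) (P : vpath N) : vpath N := (P.1.1, P.1.2 + c, P.2).

Lemma walk_edges_shift N (pi : int -> {perm 'I_N}) c :
  (forall t, pi (t + c) = pi t) ->
  forall s i t, walk_edges pi i (t + c) s = map (eshift c) (walk_edges pi i t s).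
Proof.
move=> hp; elim=> [|b s IH] i t //=.
rewrite /step hp -IH; congr (_ :: _).
by rewrite addrAC.
Qed.

Lemma walk_end_shift N (pi : int -> {perm 'I_N}) c :
  (forall t, pi (t + c) = pi t) ->
  forall s i t, walk_end pi i (t + c) s = walk_end pi i t s.
Proof.
move=> hp; elim=> [|b s IH] i t //=.
by rewrite /step hp addrAC IH.
Qed.

Lemma eshift_inj N c : injective (@eshift N c).
Proof.
move=> [[i1 t1] b1] [[i2 t2] b2] [] /= -> /addIr -> ->; done.
Qed.

Lemma eshiftK N c e : @eshift N (- c) (eshift c e) = e.
Proof. by case: e => [[i t] b]; rewrite /eshift /= addrK. Qed.

Lemma spathK N c P : @spath N (- c) (spath c P) = P.
Proof. by case: P => [[i t] s]; rewrite /spath /= addrK. Qed.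

Lemma eshiftKN N c e : @eshift N c (eshift (- c) e) = e.
Proof. by case: e => [[i t] b]; rewrite /eshift /= addrNK. Qed.

Lemma spathKN N c P : @spath N c (spath (- c) P) = P.
Proof. by case: P => [[i t] s]; rewrite /spath /= addrNK. Qed.

Lemma mem_edges_shift N (pi : int -> {perm 'I_N}) c e P :
  (forall t, pi (t + c) = pi t) ->
  (eshift c e \in path_edges pi (spath c P)) = (e \in path_edges pi P).
Proof.
move=> hp; rewrite /path_edges /spath /= walk_edges_shift //.
by rewrite mem_map //; exact: eshift_inj.
Qed.

Lemma end_shift N (pi : int -> {perm 'I_N}) c P :
  (forall t, pi (t + c) = pi t) ->
  path_end pi (spath c P) = path_end pi P.
Proof. by move=> hp; rewrite /path_end /spath /= walk_end_shift. Qed.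

Lemma pi_per N T (pi : int -> {perm 'I_N}) :
  periodic_schedule T pi -> forall k t, pi (t + k * T%:Z) = pi t.
Proof.
case=> _ hp; elim/int_rec => [|n IH|n IH] t; first by rewrite mul0r addr0.
  by rewrite -[n.+1]addn1 PoszD mulrDl mul1r addrA hp.
rewrite -[n.+1]addn1 PoszD opprD mulrDl mulN1r addrA.
by rewrite addrAC IH -[in RHS](subrK T%:Z t) hp.
Qed.



Lemma divT (T : nat) (w k : int) : (0 < T)%N -> 0 <= w < T%:Z ->
  ((w + k * T%:Z) %/ T%:Z)%Z = k.
Proof.
move=> T0 hw; rewrite addrC divzMDl; last by rewrite eqz_nat -lt0n.
by rewrite divz_small ?addr0.
Qed.

Lemma modT_bounds (T : nat) (w : int) : (0 < T)%N ->
  0 <= w + (- (w %/ T%:Z)%Z) * T%:Z < T%:Z.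
Proof.
move=> T0; rewrite mulNr {1}(divz_eq w T%:Z) addrAC subrr add0r.
by rewrite modz_ge0 ?ltz_pmod // ?eqz_nat -?lt0n // ltz_nat.
Qed.

Lemma Rt_per (R : realType) N T (pi : int -> {perm 'I_N}) Rt :
  @oblivious_routing R N T pi Rt ->
  forall k a b t P, Rt a b (t + k * T%:Z) (spath (k * T%:Z) P) = Rt a b t P.
Proof.
move=> [_ [_ [_ hR]]].
have sp c d P : spath c (spath d P) = spath (d + c) P.
  by case: P => [[i t] s]; rewrite /spath /= addrA.
elim/int_rec => [|n IH|n IH] a b t P.
- rewrite mul0r addr0; case: P => [[i t'] s]; by rewrite /spath /= addr0.
- rewrite -[n.+1]addn1 PoszD mulrDl mul1r addrA -sp.
  have := hR a b (t + n%:Z * T%:Z) (spath (n%:Z * T%:Z) P).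
  rewrite /shift_path -/(spath _ _) => ->; exact: IH.
- rewrite -(IH a b t P) -(hR a b (t + (- n.+1%:Z) * T%:Z) (spath ((- n.+1%:Z) * T%:Z) P)).
  rewrite /shift_path -/(spath _ _) sp.
  congr (Rt a b _ (spath _ P)).
  + by rewrite -[n.+1]addn1 PoszD; ring.
  + by rewrite -[n.+1]addn1 PoszD; ring.
Qed.

Section Core.
Variables (R : realType) (N T : nat) (pi : int -> {perm 'I_N}).
Hypothesis T0 : (0 < T)%N.
Hypothesis hpi : forall k t, pi (t + k * T%:Z) = pi t.
Notation X := ('I_N * 'I_N * int)%type.
Variable g : X -> vpath N -> \bar R.
Hypothesis g0 : forall x P, (0 <= g x P)%E.
Hypothesis gper : forall k x P, g (x.1, x.2 + k * T%:Z) (spath (k * T%:Z) P) = g x P.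
Variable H : edge N -> bool.
Hypothesis Hper : forall k e, H (eshift (k * T%:Z) e) = H e.

Definition phi (z : X * (vpath N * edge N)) : edge N * (vpath N * X) :=
  let c := (- (z.2.2.1.2 %/ T%:Z)%Z) * T%:Z in
  (eshift c z.2.2, (spath c z.2.1, (z.1.1, z.1.2 + c))).

Lemma core :
  \esum_(e in [set e : edge N | H e /\ 0 <= e.1.2 < T%:Z])
     \esum_(P in [set P | e \in path_edges pi P]) \esum_(x in [set: X]) g x P
  = \esum_(x in [set x : X | 0 <= x.2 < T%:Z]) \esum_(P in [set: vpath N])
      \esum_(e in [set e | H e /\ e \in path_edges pi P]) g x P.
Proof.
have -> : \esum_(e in [set e : edge N | H e /\ 0 <= e.1.2 < T%:Z])
     \esum_(P in [set P | e \in path_edges pi P]) \esum_(x in [set: X]) g x P =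
   \esum_(e in [set e : edge N | H e /\ 0 <= e.1.2 < T%:Z])
     \esum_(k in [set P | e \in path_edges pi P] `*`` (fun=> [set: X])) g k.2 k.1.
  by apply: eq_esum => e _; apply: esum_esum => *; exact: g0.
have -> : \esum_(x in [set x : X | 0 <= x.2 < T%:Z]) \esum_(P in [set: vpath N])
      \esum_(e in [set e | H e /\ e \in path_edges pi P]) g x P =
   \esum_(x in [set x : X | 0 <= x.2 < T%:Z])
     \esum_(k in [set: vpath N] `*`` (fun P => [set e | H e /\ e \in path_edges pi P])) g x k.1.
  apply: eq_esum => x _; rewrite (@esum_esum R (vpath N) (edge N)) // => *; exact: g0.
rewrite esum_esum; last by move=> *; exact: g0.
rewrite (@esum_esum R X (vpath N * edge N)%type _ _ (fun x k => g x k.1)); last by move=> *; exact: g0.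
rewrite (reindex_esum ([set x : X | 0 <= x.2 < T%:Z] `*`` (fun x => [set: vpath N] `*`` (fun P => [set e | H e /\ e \in path_edges pi P]))) _ phi); last first.
  split.
  - move=> [x [P e]] [/= hx [_ [He hm]]]; rewrite /phi /=.
    split; split => //.
    + by rewrite Hper.
    + exact: modT_bounds.
    + by rewrite mem_edges_shift.
  - move=> [x1 [P1 e1]] [x2 [P2 e2]] /set_mem [/= hx1 _] /set_mem [/= hx2 _].
    rewrite /phi /=.
    set k1 := (- (e1.1.2 %/ T%:Z)%Z); set k2 := (- (e2.1.2 %/ T%:Z)%Z).
    move=> E; have /= he := congr1 fst E; have /= hP := congr1 (fun z => z.2.1) E.
    have /= hx := congr1 (fun z => z.2.2.1) E; have /= hs := congr1 (fun z => z.2.2.2) E.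
    have k12 : k1 = k2.
      by rewrite -(divT k1 T0 hx1) -(divT k2 T0 hx2) hs.
    rewrite -k12 in he hP hs.
    have -> : e1 = e2 by rewrite -(eshiftK (k1 * T%:Z) e1) he eshiftK.
    have -> : P1 = P2 by rewrite -(spathK (k1 * T%:Z) P1) hP spathK.
    move: hx hs; clear E; case: x1 {hx1} => [ab1 t1]; case: x2 {hx2} => [ab2 t2] /= -> /addIr -> //.
  - move=> [e' [P' x']] [/= [He' ht'] [hm _]].
    pose k := (x'.2 %/ T%:Z)%Z; pose s := (x'.2 %% T%:Z)%Z.
    exists ((x'.1, s), (spath ((- k) * T%:Z) P', eshift ((- k) * T%:Z) e')).
      split => /=; first by rewrite /s modz_ge0 ?ltz_pmod ?eqz_nat -?lt0n ?ltz_nat.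
      split => //; split; first by rewrite Hper.
      by rewrite mem_edges_shift.
    rewrite /phi /= divT //.
    rewrite opprK mulNr eshiftKN spathKN.
    by case: x' {ht' hm} @k @s => ab t /=; rewrite [in RHS](divz_eq t T%:Z) addrC.
apply: eq_esum => -[x [P e]] _ /=.
by rewrite gper.
Qed.

End Core.



Section esumlemmas.
Variables (R : realType) (I : choiceType).
Local Open Scope ereal_scope.

Lemma esumZl (S : set I) (f : I -> \bar R) (c : R) : (0 <= c)%R ->
  (forall i, 0 <= f i) ->
  \esum_(i in S) (c%:E * f i) = c%:E * \esum_(i in S) f i.
Proof.
move=> c0 f0; rewrite /esum -ereal_supZl //; last first.
  by apply/set0P; exists 0; exists set0; [exact: fsets_set0|rewrite fsbig_set0].
congr ereal_sup; apply/seteqP; split => y.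
- move=> [A [finA AS] <-]; exists (\sum_(x \in A) f x); first by exists A.
  rewrite !fsbig_finite // ge0_sume_distrr //.
- move=> [z [A [finA AS] <-] <-]; exists A => //.
  by rewrite !fsbig_finite // ge0_sume_distrr //.
Qed.

Lemma esum_ge1 (S : set I) (f : I -> \bar R) t : (forall i, 0 <= f i) ->
  S t -> f t <= \esum_(i in S) f i.
Proof.
move=> f0 St; apply: esum_ge; exists [set t].
  by split; [exact: finite_set1| move=> x ->].
by rewrite fsbig_set1.
Qed.

Lemma esum_ge2 (S : set I) (f : I -> \bar R) t1 t2 : (forall i, 0 <= f i) ->
  S t1 -> S t2 -> t1 <> t2 -> f t1 + f t2 <= \esum_(i in S) f i.
Proof.
move=> f0 S1 S2 t12; apply: esum_ge; exists [set t1; t2].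
  split; first by rewrite finite_setU; split; exact: finite_set1.
  by move=> x [->|->].
rewrite fsbigU ?fsbig_set1 ?finite_set1 //.
by move=> x [/= -> h]; exfalso; apply: t12.
Qed.

End esumlemmas.

Section walks.
Variables (N : nat) (pi : int -> {perm 'I_N}).

Lemma walk_times i t s e : e \in walk_edges pi i t s -> t <= e.1.2.
Proof.
elim: s i t => [|b s IH] i t //=; rewrite in_cons => /orP[/eqP -> //|/IH].
by apply: le_trans; rewrite lerDl.
Qed.

Lemma walk_nophys i t s : (forall e, e \in walk_edges pi i t s -> ~~ e.2) ->
  walk_end pi i t s = i.
Proof.
elim: s i t => [|b s IH] i t //= h.
case: b h => h; first by have := h _ (mem_head _ _).
by apply: IH => e he; apply: h; rewrite in_cons he orbT.
Qed.

Lemma walk_key i t s : walk_end pi i t s != i ->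
  exists e1, [/\ e1 \in walk_edges pi i t s, is_true e1.2 &
   ((forall e2, e2 \in walk_edges pi i t s -> is_true e2.2 -> e2 = e1) ->
     e1.1.1 = i /\ pi e1.1.2 i = walk_end pi i t s)].
Proof.
elim: s i t => [|b s IH] i t /=; first by rewrite eqxx.
case: b; rewrite /step /= => hne.
- exists (i, t, true); split => //; first exact: mem_head.
  move=> hu; split => //; apply/esym/walk_nophys => e he.
  apply/negP => he2; have := hu e; rewrite in_cons he orbT => /(_ isT he2) ee.
  have := walk_times he; rewrite ee /= => h.
  have : t < t + 1 by rewrite ltrDl.
  by rewrite ltNge h.
- have [e1 [m1 p1 u1]] := IH i (t + 1) hne; exists e1; split => //.
  + by rewrite in_cons m1 orbT.
  + move=> hu; apply: u1 => e2 m2; apply: hu; by rewrite in_cons m2 orbT.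
Qed.

End walks.

Definition dirH N (pi : int -> {perm 'I_N}) (a b : 'I_N) (e : edge N) : bool :=
  [&& e.1.1 == a, e.2 & pi e.1.2 a == b].

Lemma point_bound (R : realType) N (pi : int -> {perm 'I_N}) (a b : 'I_N) (P : vpath N)
  (c : \bar R) : (0 <= c)%E -> a != b -> P.1.1 = a -> path_end pi P = b ->
  (c + c <= \esum_(e in [set e : edge N | is_true e.2 /\ e \in path_edges pi P]) c
     + \esum_(e in [set e | dirH pi a b e /\ e \in path_edges pi P]) c)%E.
Proof.
move=> c0 ab hP1 hPe.
have hne : walk_end pi P.1.1 P.1.2 P.2 != P.1.1.
  by move: hPe; rewrite /path_end => ->; rewrite hP1 eq_sym.
have [e1 [m1 p1 u1]] := walk_key hne.
have [[e2 [m2 p2 ne]]|none] :=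
  pselect (exists e2, [/\ e2 \in path_edges pi P, is_true e2.2 & e2 <> e1]).
- apply: le_trans (_ : _ <= \esum_(e in [set e : edge N | is_true e.2 /\ e \in path_edges pi P]) c)%E _.
    apply: (esum_ge2 (f := fun=> c) (t1 := e1) (t2 := e2)) => //.
    by move/esym.
  by rewrite leeDl // esum_ge0.
- have [h1 h2] : e1.1.1 = P.1.1 /\ pi e1.1.2 P.1.1 = walk_end pi P.1.1 P.1.2 P.2.
    apply: u1 => e2 m2 p2; apply: contrapT => ne; apply: none; by exists e2.
  apply: leeD.
    by apply: (esum_ge1 (f := fun=> c) (t := e1)).
  apply: (esum_ge1 (f := fun=> c) (t := e1)) => //; split => //.
  rewrite /dirH p1 -hP1 h1 eqxx /= h2; apply/eqP; exact: hPe.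
Qed.



Lemma esum_finT (R : realType) (I : finType) (a : I -> \bar R) :
  (forall i, (0 <= a i)%E) -> \esum_(i in [set: I]) a i = \sum_(i : I) a i.
Proof.
move=> a0.
have -> : [set: I] = [set` enum I].
  by apply/seteqP; split => // i _; rewrite /= mem_enum.
rewrite esum_fset //.
by rewrite -fsbig_seq ?enum_uniq // big_enum.
Qed.

Lemma esum_finP (R : realType) (I : finType) (P : pred I) (a : I -> \bar R) :
  (forall i, (0 <= a i)%E) -> \esum_(i in [set i | P i]) a i = \sum_(i : I | P i) a i.
Proof.
move=> a0; rewrite esum_mkcond esum_finT; last by move=> i; case: ifP.
rewrite [RHS]big_mkcond; apply: eq_bigr => i _ /=.
by rewrite mem_setE.
Qed.

Section Main.
Variables (R : realType) (N T : nat) (pi : int -> {perm 'I_N})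
  (Rt : 'I_N -> 'I_N -> int -> vpath N -> \bar R) (r : R).
Hypotheses (N2 : (2 <= N)%N) (hS : periodic_schedule T pi)
  (hR : oblivious_routing T pi Rt) (hG : guarantees_throughput pi Rt r).
Hypothesis r0 : 0 <= r.

Let T0 : (0 < T)%N := hS.1.
Let hpi := pi_per hS.
Notation X := ('I_N * 'I_N * int)%type.
Let X0 : set X := [set x | 0 <= x.2 < T%:Z].

Let Rt0 a b t P : (0 <= Rt a b t P)%E := (hR.1 a b t P).1.

Lemma core_load (M : 'M[R]_N) (H : edge N -> bool) :
  (forall a b, 0 <= M a b) -> (forall k e, H (eshift (k * T%:Z) e) = H e) ->
  \esum_(e in [set e : edge N | H e /\ 0 <= e.1.2 < T%:Z])
     load pi (induced_flow Rt (fun=> M)) e =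
  \esum_(x in X0) \esum_(P in [set: vpath N])
     \esum_(e in [set e | H e /\ e \in path_edges pi P])
        ((M x.1.1 x.1.2)%:E * Rt x.1.1 x.1.2 x.2 P)%E.
Proof.
move=> M0 Hp.
apply: (@core R N T pi T0 hpi (fun x P => ((M x.1.1 x.1.2)%:E * Rt x.1.1 x.1.2 x.2 P)%E) _ _ H Hp).
- by move=> x P; apply: mule_ge0; [rewrite lee_fin|exact: Rt0].
- by move=> k [[a b] t] P /=; rewrite (Rt_per hR).
Qed.

Lemma feas_bound (D : int -> 'M[R]_N) (H : edge N -> bool) :
  demand_ok D -> requests_at_most D r -> (forall e, H e -> is_true e.2) ->
  (\esum_(e in [set e : edge N | H e /\ (0 <= e.1.2 < T%:Z)%R]) load pi (induced_flow Rt D) e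
   <= \esum_(e in [set e : edge N | H e /\ (0 <= e.1.2 < T%:Z)%R]) 1)%E.
Proof.
move=> Dok Dr Hp; apply: le_esum => e [He _]; exact: (hG Dok Dr (Hp e He)).
Qed.


Lemma cnt_phys :
  \esum_(e in [set e : edge N | is_true e.2 /\ (0 <= e.1.2 < T%:Z)%R]) (1%E : \bar R)
  = ((N * T)%:R)%:E.
Proof.
pose f (k : 'I_N * 'I_T) : edge N := (k.1, (k.2 : nat)%:Z, true).
have -> : [set e : edge N | is_true e.2 /\ (0 <= e.1.2 < T%:Z)%R] = f @` [set: 'I_N * 'I_T].
  apply/seteqP; split.
  - move=> [[i [n|n]] b] /= [hb ht] //; rewrite hb in ht *.
    rewrite ltz_nat in ht; exists (i, Ordinal ht) => //.
  - by move=> _ [k _ <-] /=; split => //; rewrite ltz_nat ltn_ord.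
rewrite esum_image; last by move=> [i1 t1] [i2 t2] _ _ [] -> /val_inj ->.
rewrite esum_finT // sumEFin sumr_const card_prod !card_ord.
by rewrite -[in RHS]mulr_natr mul1r.
Qed.

Lemma cnt_dir a b :
  \esum_(e in [set e : edge N | dirH pi a b e /\ (0 <= e.1.2 < T%:Z)%R]) (1%E : \bar R)
  = (\sum_(t < T | pi (t : nat)%:Z a == b) (1 : R))%:E.
Proof.
pose f (t : 'I_T) : edge N := (a, (t : nat)%:Z, true).
have -> : [set e : edge N | dirH pi a b e /\ (0 <= e.1.2 < T%:Z)%R] =
    f @` [set t : 'I_T | pi (t : nat)%:Z a == b].
  apply/seteqP; split.
  - move=> [[i [n|n]] c] /= [hd ht] //; move: hd; rewrite /dirH /= => /and3P[/eqP -> -> hb].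
    rewrite ltz_nat in ht; exists (Ordinal ht) => //.
  - by move=> _ [t ht <-] /=; split; rewrite /dirH /= ?eqxx ?ht // ltz_nat ltn_ord.
rewrite esum_image; last by move=> t1 t2 _ _ [] /val_inj.
by rewrite esum_finP // sumEFin.
Qed.

Lemma sum_cd :
  \sum_(p : 'I_N * 'I_N) \sum_(t < T | pi (t : nat)%:Z p.1 == p.2) (1 : R) = (N * T)%:R.
Proof.
rewrite -(pair_big xpredT xpredT (fun a b => \sum_(t < T | pi (t : nat)%:Z a == b) (1 : R))) /=.
rewrite (eq_bigr (fun=> T%:R)); last first.
  move=> a _; under eq_bigr do rewrite big_mkcond.
  rewrite exchange_big /=.
  rewrite (eq_bigr (fun=> 1)); first by rewrite sumr_const card_ord.
  by move=> t _; rewrite -big_mkcond (big_pred1 (pi (t : nat)%:Z a)) // => b; rewrite eq_sym.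
by rewrite sumr_const card_ord natrM mulr_natl.
Qed.


Lemma N1 : 0 < N%:R - 1 :> R.
Proof. by rewrite subr_gt0 ltr1n. Qed.

Definition u := r / (N%:R - 1).
Lemma u0 : 0 <= u. Proof. exact: divr_ge0 r0 (ltW N1). Qed.

Definition Mu : 'M[R]_N := \matrix_(a, b) (if a != b then u else 0).
Definition Mab (a b : 'I_N) : 'M[R]_N :=
  \matrix_(a', b') (if (a' == a) && (b' == b) then r else 0).

Lemma card_neq (a : 'I_N) : #|[pred b : 'I_N | a != b]| = N.-1.
Proof.
have := cardC1 a; rewrite card_ord => <-.
by apply: eq_card => b; rewrite !inE eq_sym.
Qed.

Lemma uN : u *+ N.-1 = r.
Proof.
rewrite -mulr_natr -subn1 natrB; last exact: ltnW.
by rewrite /u divfK // lt0r_neq0 // N1.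
Qed.

Lemma Mu_row a : \sum_b Mu a b = r.
Proof.
under eq_bigr do rewrite mxE.
by rewrite -big_mkcond /= sumr_const card_neq uN.
Qed.

Lemma Mu_col b : \sum_a Mu a b = r.
Proof.
under eq_bigr do rewrite mxE.
rewrite -big_mkcond /= sumr_const.
rewrite (_ : #|_| = N.-1) ?uN //.
by rewrite -(card_neq b); apply: eq_card => a; rewrite !inE eq_sym.
Qed.

Lemma Mu_ok : demand_ok (fun=> Mu).
Proof. by move=> t a b; rewrite mxE; case: ifP => // _; exact: u0. Qed.

Lemma Mu_req : requests_at_most (fun=> Mu) r.
Proof. by move=> t; split => x; rewrite ?Mu_row ?Mu_col. Qed.

Lemma Mab_ok a b : demand_ok (fun=> Mab a b).
Proof. by move=> t a' b'; rewrite mxE; case: ifP. Qed.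

Lemma Mab_req a b : requests_at_most (fun=> Mab a b) r.
Proof.
move=> t; split => x.
- under eq_bigr do rewrite mxE.
  case: (x =P a) => _ /=.
  + by rewrite -big_mkcond big_pred1_eq.
  + by rewrite big1.
- under eq_bigr do rewrite mxE.
  case: (x =P b) => _ /=.
  + under eq_bigr do rewrite andbT.
    by rewrite -big_mkcond big_pred1_eq.
  + by under eq_bigr do rewrite andbF; rewrite big1.
Qed.


Definition w : R := (N%:R - 1)^-1.

Definition U (x : X) : \bar R := \esum_(P in [set: vpath N])
   \esum_(e in [set e : edge N | is_true e.2 /\ e \in path_edges pi P])
     ((Mu x.1.1 x.1.2)%:E * Rt x.1.1 x.1.2 x.2 P)%E.

Definition V (a b : 'I_N) (x : X) : \bar R := \esum_(P in [set: vpath N])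
   \esum_(e in [set e : edge N | dirH pi a b e /\ e \in path_edges pi P])
     ((Mab a b x.1.1 x.1.2)%:E * Rt x.1.1 x.1.2 x.2 P)%E.

Lemma Mu0 a b : 0 <= Mu a b.
Proof. exact: (Mu_ok 0). Qed.

Lemma Mab0 a b a' b' : 0 <= Mab a b a' b'.
Proof. exact: (Mab_ok a b 0). Qed.

Lemma U0 x : (0 <= U x)%E.
Proof.
apply: esum_ge0 => P _; apply: esum_ge0 => e _; apply: mule_ge0 => //.
by rewrite lee_fin Mu0.
Qed.

Lemma V0 a b x : (0 <= V a b x)%E.
Proof.
apply: esum_ge0 => P _; apply: esum_ge0 => e _; apply: mule_ge0 => //.
by rewrite lee_fin Mab0.
Qed.

Lemma stepA : (\esum_(x in X0) U x <= ((N * T)%:R)%:E)%E.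
Proof.
have h1 := core_load (M := Mu) (H := fun e : edge N => e.2) Mu0 (fun k e => erefl).
have h2 := feas_bound (D := fun=> Mu) (H := fun e : edge N => e.2) Mu_ok Mu_req (fun e h => h).
move: h1 h2; rewrite /= => h1 h2.
rewrite /U -h1 -cnt_phys; exact: h2.
Qed.

Lemma dirH_phys a b e : dirH pi a b e -> is_true e.2.
Proof. by case/and3P. Qed.

Lemma stepB a b : (\esum_(x in X0) V a b x <=
   (\sum_(t < T | pi (t : nat)%:Z a == b) (1 : R))%:E)%E.
Proof.
have Hp : forall k e, dirH pi a b (eshift (k * T%:Z) e) = dirH pi a b e.
  by move=> k [[i t] c]; rewrite /dirH /eshift /= hpi.
have h1 := core_load (M := Mab a b) (H := dirH pi a b) (Mab0 a b) Hp.
have h2 := feas_bound (D := fun=> Mab a b) (H := dirH pi a b) (Mab_ok a b) (Mab_req a b)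
  (fun e h => dirH_phys h).
rewrite /V -h1 -cnt_dir; exact: h2.
Qed.


Lemma w0 : 0 <= w.
Proof. by rewrite /w invr_ge0 ltW // N1. Qed.

Lemma stepC x : X0 x ->
  ((2 * Mu x.1.1 x.1.2)%:E <= U x + w%:E * \sum_(p : 'I_N * 'I_N) V p.1 p.2 x)%E.
Proof.
case: x => [[a b] s] /= hs.
have hsum0 : (0 <= \sum_(p : 'I_N * 'I_N) V p.1 p.2 ((a, b), s))%E.
  by apply: sume_ge0 => p _; exact: V0.
rewrite mxE; case: ifPn => [ab|_]; last first.
  by rewrite mulr0 adde_ge0 ?U0 // mule_ge0 // lee_fin w0.
have hV : (V a b ((a, b), s) <= \sum_(p : 'I_N * 'I_N) V p.1 p.2 ((a, b), s))%E.
  rewrite (bigD1 (a, b)) //= leeDl //.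
  by apply: sume_ge0 => p _; exact: V0.
apply: le_trans (_ : _ <= U ((a, b), s) + w%:E * V a b ((a, b), s))%E _; last first.
  by rewrite leeD2l // lee_wpmul2l // lee_fin w0.
rewrite /U /V /= !mxE !eqxx ab /=.
have E1 : (w%:E * (\esum_(P in [set: vpath N]) \esum_(e in [set e : edge N | dirH pi a b e /\ e \in path_edges pi P]) (r%:E * Rt a b s P)) =
   \esum_(P in [set: vpath N]) \esum_(e in [set e : edge N | dirH pi a b e /\ e \in path_edges pi P]) (u%:E * Rt a b s P))%E.
  rewrite -esumZl ?w0 //; last first.
    by move=> P; apply: esum_ge0 => e _; apply: mule_ge0 => //; rewrite lee_fin.
  apply: eq_esum => P _; rewrite -esumZl ?w0 //; last first.
    by move=> e; apply: mule_ge0 => //; rewrite lee_fin.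
  by apply: eq_esum => e _; rewrite muleA -EFinM /u /w mulrC.
rewrite E1 -esumD; first last.
- by move=> P _; apply: esum_ge0 => e _; apply: mule_ge0 => //; rewrite lee_fin u0.
- by move=> P _; apply: esum_ge0 => e _; apply: mule_ge0 => //; rewrite lee_fin u0.
have E2 : (2 * u)%:E = (\esum_(P in [set: vpath N]) (u%:E * Rt a b s P + u%:E * Rt a b s P))%E.
  rewrite esumD; first last.
  - by move=> P _; apply: mule_ge0 => //; rewrite lee_fin u0.
  - by move=> P _; apply: mule_ge0 => //; rewrite lee_fin u0.
  rewrite esumZl ?u0 // (hR.2.2.1 a b s) mule1 -EFinD.
  by congr (_%:E); rewrite mulr2n mulrDl mul1r.
rewrite E2; apply: le_esum => P _.
have [hin|hout] := pselect (in_Pabt pi a b s P).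
- case: hin => h1 [h2 h3].
  apply: point_bound => //.
  by apply: mule_ge0 => //; rewrite lee_fin u0.
- have z : (u%:E * Rt a b s P = 0)%E by rewrite (hR.2.1 a b s P hout); exact: mule0.
  have z2 : (u%:E * Rt a b s P + u%:E * Rt a b s P <= 0)%E by rewrite z adde0.
  apply: le_trans z2 _.
  by apply: adde_ge0; apply: esum_ge0 => *; apply: mule_ge0 => //; rewrite lee_fin u0.
Qed.


Lemma stepE : \esum_(x in X0) ((2 * Mu x.1.1 x.1.2)%:E) = ((2 * r) * (N * T)%:R)%:E.
Proof.
pose h (k : 'I_N * 'I_N * 'I_T) : X := (k.1, (k.2 : nat)%:Z).
have -> : X0 = h @` [set: 'I_N * 'I_N * 'I_T].
  apply/seteqP; split.
  - move=> [ab [n|n]]; rewrite /X0 /= => ht //; rewrite ltz_nat in ht.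
    by exists (ab, Ordinal ht).
  - by move=> _ [k _ <-]; rewrite /X0 /= ltz_nat ltn_ord.
rewrite esum_image; last by move=> [ab1 t1] [ab2 t2] _ _ [] -> /val_inj ->.
rewrite esum_finT; last by move=> k; rewrite lee_fin mulr_ge0 // Mu0.
rewrite sumEFin; congr (_%:E).
rewrite -(pair_big xpredT xpredT (fun (p : 'I_N * 'I_N) (c : 'I_T) => 2 * Mu p.1 p.2)) /=.
rewrite (eq_bigr (fun p => (2 * Mu p.1 p.2) *+ T)); last by move=> p _; rewrite sumr_const card_ord.
rewrite sumrMnl -mulr_sumr.
rewrite -(pair_big xpredT xpredT (fun a b => Mu a b)) /=.
rewrite (eq_bigr (fun=> r)); last by move=> a _; exact: Mu_row.
by rewrite sumr_const card_ord natrM mulrA !mulr_natr mulrnAr.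
Qed.

Lemma stepD : (\esum_(x in X0) ((2 * Mu x.1.1 x.1.2)%:E) <=
   ((N * T)%:R)%:E + w%:E * ((N * T)%:R)%:E)%E.
Proof.
apply: le_trans (_ : _ <= \esum_(x in X0) (U x + w%:E * \sum_(p : 'I_N * 'I_N) V p.1 p.2 x))%E _.
  by apply: le_esum => x hx; exact: stepC.
rewrite esumD; first last.
- by move=> x _; apply: mule_ge0; [rewrite lee_fin w0|apply: sume_ge0 => p _; exact: V0].
- by move=> x _; exact: U0.
rewrite esumZl ?w0 //; last by move=> x; apply: sume_ge0 => p _; exact: V0.
rewrite esum_sum; last by move=> x p _ _; exact: V0.
apply: leeD; first exact: stepA.
apply: lee_wpmul2l; first by rewrite lee_fin w0.
rewrite -sum_cd -sumEFin; apply: lee_sum => p _; exact: stepB.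
Qed.

Lemma final : r <= 2^-1 + (2 * (N%:R - 1))^-1.
Proof.
have h := stepD; rewrite stepE -EFinM -EFinD lee_fin in h.
have K0 : 0 < (N * T)%:R :> R by rewrite ltr0n muln_gt0 T0 (ltn_trans _ N2).
have h2 : 2 * r <= 1 + w.
  by rewrite -(ler_pM2r K0) [X in _ <= X]mulrDl mul1r.
rewrite invfM -/w.
apply: (le_trans (y := (2 * r) / 2)); first by rewrite mulrC mulKf.
rewrite [2^-1 + _](_ : _ = (1 + w) * 2^-1); last by rewrite mulrDl mul1r mulrC.
by rewrite ler_pM2r // invr_gt0.
Qed.

End Main.

Theorem mainTheorem7 (R : realType) (N T : nat) (pi : int -> {perm 'I_N})
  (Rt : 'I_N -> 'I_N -> int -> vpath N -> \bar R) (r : R) :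
  (2 <= N)%N ->
  periodic_schedule T pi ->
  oblivious_routing T pi Rt ->
  guarantees_throughput pi Rt r ->
  r <= 2^-1 + (2 * (N%:R - 1))^-1.
Proof.
move=> N2 hS hR hG.
have [r0|rlt0] := Order.TotalTheory.leP 0 r; first exact: (final N2 hS hR hG r0).
have h : 0 < (2 * (N%:R - 1 : R))^-1 by rewrite invr_gt0 mulr_gt0 // (N1 R N2).
apply: le_trans (ltW rlt0) _; apply: addr_ge0; [by rewrite invr_ge0 | exact: ltW].
Qed.
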